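(* Let $q$ be a prime power, let $X^2+\mu X+\lambda$ be a primitive polynomial over $\mathbb F_q$, let $\bar x\in PGL_2(q)$ be the image of $\begin{pmatrix}0&1\\-\lambda&-\mu\end{pmatrix}$, $C=\langle\bar x\rangle$, and let $S\le PGL_2(q)$ be the image of the invertible upper triangular matrices. For the right action of $S$ on $C$ defined by $cs=s'c^{[s]}$ ($s'\in S$, $c^{[s]}\in C$), the stabilizer $\mathrm{Stab}_S(\bar x)=\{s\in S:\bar x^{[s]}=\bar x\}$ is isomorphic to the cyclic group $\mathbb Z_{q-1}$.
   Context: $PGL_2(q)=CS$ with $C\cap S=1$, so each product $cs$ ($c\in C$, $s\in S$) is uniquely $s'c'$ with $s'\in S$, $c'\in C$; $c^{[s]}:=c'$. *)

(* Defs.v *)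
From HB Require Import structures.
From mathcomp Require Import all_boot all_order all_algebra all_fingroup all_solvable all_field.
From mathcomp Require Export qfpoly.
Set Implicit Arguments. Unset Strict Implicit. Unset Printing Implicit Defensive.
Import GRing.Theory.

Local Open Scope group_scope.

Section PGL2.
Variable F : finFieldType.

Definition GL2 := {'GL_2[F]}.

Definition scalarGL : {set GL2} := [set g : GL2 | is_scalar_mx (GLval g)].

Definition PGL2 := coset_of scalarGL.
Definition pgl (g : GL2) : PGL2 := coset scalarGL g.

(* an invertible matrix as an element of GL_2 (identity if not invertible) *)
Definition gl_of (M : 'M[F]_2) : GL2 := insubd (1 : GL2) M.

(* the image of the companion matrix [[0,1],[-lam,-mu]] *)
Definition xbar (mu lam : F) : PGL2 :=
  pgl (gl_of (\matrix_(i < 2, j < 2)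
      (if i == 0 :> nat then (if j == 0 :> nat then 0 else 1)%R
       else (if j == 0 :> nat then - lam else - mu)%R))).

Definition Cgrp (mu lam : F) : {set PGL2} := <[xbar mu lam]>.

Definition Sgrp : {set PGL2} := pgl @: [set g : GL2 | GLval g ord_max ord0 == 0%R].

(* c^[s] : the C-component c' of the unique factorization c s = s' c' *)
Definition bracket (mu lam : F) (c s : PGL2) : PGL2 :=
  odflt 1 [pick c' in Cgrp mu lam | (c * s) \in Sgrp :* c'].

Definition StabS (mu lam : F) : {set PGL2} :=
  [set s in Sgrp | bracket mu lam (xbar mu lam) s == xbar mu lam].

End PGL2.

Local Open Scope ring_scope.

(* Main.v *)
Require Import Defs.
From HB Require Import structures.
From mathcomp Require Import all_boot all_order all_algebra all_fingroup all_solvable all_field.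
From mathcomp Require Import ring.
Set Implicit Arguments. Unset Strict Implicit. Unset Printing Implicit Defensive.
Import GRing.Theory.
Local Open Scope ring_scope.

Section S.
Variable F : finFieldType.

Definition mk (a b c d : F) : 'M[F]_2 := \matrix_(i < 2, j < 2)
      (if i == 0 :> nat then (if j == 0 :> nat then a else b)
       else (if j == 0 :> nat then c else d)).

Lemma mkE (A : 'M[F]_2) : A = mk (A 0 0) (A 0 1) (A 1 0) (A 1 1).
Proof. by apply/matrixP => -[[|[|//]] ?] [[|[|//]] ?]; rewrite mxE /=; congr (A _ _); apply: val_inj. Qed.

Lemma mk00 a b c d : mk a b c d 0 0 = a. Proof. by rewrite mxE. Qed.
Lemma mk01 a b c d : mk a b c d 0 1 = b. Proof. by rewrite mxE. Qed.
Lemma mk10 a b c d : mk a b c d 1 0 = c. Proof. by rewrite mxE. Qed.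
Lemma mk11 a b c d : mk a b c d 1 1 = d. Proof. by rewrite mxE. Qed.

Lemma mkM a b c d a' b' c' d' : mk a b c d *m mk a' b' c' d' =
  mk (a*a' + b*c') (a*b' + b*d') (c*a' + d*c') (c*b' + d*d').
Proof.
apply/matrixP => -[[|[|//]] ?] [[|[|//]] ?]; rewrite !mxE !big_ord_recl big_ord0 !mxE /= addr0 //.
Qed.

Lemma mulm2E (A B : 'M[F]_2) i j : (A *m B) i j = A i 0 * B 0 j + A i 1 * B 1 j.
Proof. by rewrite mxE !big_ord_recl big_ord0 addr0 /=; congr (_ + A i _ * B _ j); apply: val_inj. Qed.

Lemma mk_eq a b c d a' b' c' d' : a = a' -> b = b' -> c = c' -> d = d' -> mk a b c d = mk a' b' c' d'.
Proof. by move=> -> -> -> ->. Qed.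

Lemma mkZ k a b c d : k *: mk a b c d = mk (k*a) (k*b) (k*c) (k*d).
Proof. by apply/matrixP => -[[|[|//]] ?] [[|[|//]] ?]; rewrite !mxE. Qed.

Lemma mk_scalar a : mk a 0 0 a = a%:M.
Proof. by apply/matrixP => -[[|[|//]] ?] [[|[|//]] ?]; rewrite !mxE. Qed.


Local Open Scope group_scope.

Lemma gl_ofE (M : 'M[F]_2) : M \in unitmx -> GLval (gl_of M) = M.
Proof. by move=> uM; rewrite /gl_of val_insubd uM. Qed.

Lemma gl_ofM (A B : 'M[F]_2) : A \in unitmx -> B \in unitmx ->
  gl_of A * gl_of B = gl_of (A *m B).
Proof.
move=> uA uB; apply: val_inj.
change (GLval (gl_of A * gl_of B) = GLval (gl_of (A *m B))).
by rewrite GL_ME !gl_ofE ?unitmx_mul ?uA.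
Qed.

Lemma gl_ofK (g : GL2 F) : gl_of (GLval g) = g.
Proof. by apply: val_inj; rewrite /= gl_ofE //; case: g. Qed.

Lemma sc_group_set : group_set (scalarGL F).
Proof.
apply/group_setP; split; first by rewrite inE GL_1E; apply/is_scalar_mxP; exists 1%R.
move=> x y; rewrite !inE GL_ME => /is_scalar_mxP[a ->] /is_scalar_mxP[b ->].
by apply/is_scalar_mxP; exists (a*b)%R; rewrite -mulmxE -scalar_mxM.
Qed.
Canonical scG := Group sc_group_set.

Lemma norm_sc (g : GL2 F) : g \in 'N(scalarGL F).
Proof.
rewrite inE; apply/subsetP => y /imsetP[z]; rewrite inE => /is_scalar_mxP[a za] ->.
rewrite inE conjgE !GL_ME za -!mulmxE.
rewrite -scalar_mxC mulmxA mulmxE -GL_ME mulVg GL_1E mul1r.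
by apply/is_scalar_mxP; exists a.
Qed.

Lemma pglM (g h : GL2 F) : pgl (g * h) = pgl g * pgl h.
Proof. by rewrite /pgl coset_morphM ?norm_sc. Qed.

Lemma pglV (g : GL2 F) : pgl g^-1 = (pgl g)^-1.
Proof. by rewrite /pgl morphV ?norm_sc. Qed.

Lemma pglX (g : GL2 F) k : pgl (g ^+ k) = pgl g ^+ k.
Proof. by rewrite /pgl morphX ?norm_sc. Qed.

Lemma pgl1P (g : GL2 F) : (pgl g == 1) = is_scalar_mx (GLval g).
Proof.
apply/eqP/idP => [h|h]; last by rewrite /pgl coset_id // inE.
by have := coset_idr (H := scG) (norm_sc g) h; rewrite inE.
Qed.

Lemma pgl_surj (y : PGL2 F) : exists g, y = pgl g.
Proof. by case: (cosetP y) => g _ ->; exists g. Qed.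

Lemma pgl_eq (g h : GL2 F) : pgl g = pgl h -> exists c, GLval g = c%:M *m GLval h.
Proof.
move=> e; have /eqP : pgl (g * h^-1) = 1 by rewrite pglM pglV e mulgV.
rewrite pgl1P GL_ME => /is_scalar_mxP[c hc]; exists c.
by rewrite -hc -mulmxE -mulmxA mulmxE -GL_ME mulVg GL_1E mulr1.
Qed.

Lemma om : (ord_max : 'I_2) = 1%R. Proof. by apply: val_inj. Qed.
Lemma o0 : (ord0 : 'I_2) = 0%R. Proof. by apply: val_inj. Qed.

Lemma inS (g : GL2 F) : (pgl g \in Sgrp F) = (GLval g 1%R 0%R == 0%R).
Proof.
rewrite /Sgrp; apply/idP/idP => [/imsetP[h]|h]; last by apply/imsetP; exists g => //; rewrite inE om o0.
rewrite inE om o0 => /eqP h0 /pgl_eq[c ->]; rewrite mul_scalar_mx mxE.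
by rewrite h0 mulr0.
Qed.

Lemma pgl1 : pgl (1 : GL2 F) = 1.
Proof. by apply/eqP; rewrite pgl1P GL_1E; apply/is_scalar_mxP; exists 1%R. Qed.

Lemma GLM10 (g h : GL2 F) : GLval (g * h) 1%R 0%R = (GLval g 1%R 0%R * GLval h 0%R 0%R + GLval g 1%R 1%R * GLval h 1%R 0%R)%R.
Proof. by rewrite GL_ME -mulmxE mulm2E. Qed.

Lemma S_group_set : group_set (Sgrp F).
Proof.
apply/group_setP; split; first by rewrite -pgl1 inS GL_1E mxE.
move=> y z; case: (pgl_surj y) => g ->; case: (pgl_surj z) => h ->.
by rewrite -pglM !inS GLM10 => /eqP -> /eqP ->; rewrite !mulr0 mul0r addr0.
Qed.
Canonical SG := Group S_group_set.


Section Main.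
Variables (mu lam : F).
Hypothesis hl : lam != 0%R.

Definition Mx := mk 0%R 1%R (- lam)%R (- mu)%R.
Definition Nx := mk (- mu / lam)%R (- 1 / lam)%R 1%R 0%R.

Lemma MN : Mx *m Nx = 1%:M.
Proof. by rewrite mkM -mk_scalar; apply: mk_eq; field. Qed.

Definition xg := gl_of Mx.
Definition ig := gl_of Nx.

Lemma xgE : GLval xg = Mx.
Proof. by rewrite gl_ofE //; case: (mulmx1_unit MN). Qed.
Lemma igE : GLval ig = Nx.
Proof. by rewrite gl_ofE //; case: (mulmx1_unit MN). Qed.

Lemma xbarE : xbar mu lam = pgl xg.
Proof. by []. Qed.

Lemma xbarV : (xbar mu lam)^-1 = pgl ig.
Proof.
rewrite xbarE -pglV; congr pgl; apply/eqP; rewrite eq_invg_mul; apply/eqP.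
by apply: val_inj; change (GLval (xg * ig) = GLval 1); rewrite GL_ME xgE igE GL_1E -mulmxE MN.
Qed.

Lemma xpow k : exists a b, GLval (xg ^+ k) = mk a b (- lam * b)%R (a - mu * b)%R.
Proof.
elim: k => [|k [a [b IH]]].
  exists 1%R, 0%R; rewrite expg0 GL_1E; transitivity (mk 1%R 0%R 0%R 1%R); first by rewrite mk_scalar.
  by apply: mk_eq; ring.
exists (- lam * b)%R, (a - mu * b)%R; rewrite expgS GL_ME xgE IH -mulmxE mkM.
by apply: mk_eq; ring.
Qed.

Lemma CS1 y : y \in Cgrp mu lam -> y \in Sgrp F -> y = 1.
Proof.
case/cycleP => k ->; rewrite xbarE -pglX inS.
case: (xpow k) => a [b E]; rewrite E mk10 mulNr oppr_eq0 mulf_eq0 (negbTE hl) /= => /eqP b0.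
apply/eqP; rewrite pgl1P; apply/is_scalar_mxP; exists a; rewrite E -mk_scalar b0.
by apply: mk_eq; ring.
Qed.

Lemma xbar_neq1 : xbar mu lam != 1.
Proof.
rewrite xbarE pgl1P xgE; apply/is_scalar_mxP => -[a].
by move/matrixP/(_ 0%R 1%R); rewrite mk01 mxE /= => /eqP; rewrite oner_eq0.
Qed.


Lemma stabP s : (s \in StabS mu lam) =
  (s \in Sgrp F) && (xbar mu lam * s * (xbar mu lam)^-1 \in Sgrp F).
Proof.
rewrite /StabS inE; case sS: (s \in Sgrp F) => //=.
rewrite /bracket; case: pickP => [c /andP[Cc Sc] | none] /=.
  rewrite mem_rcoset in Sc.
  apply/eqP/idP => [e | h]; first by rewrite e in Sc.
  apply/eqP; rewrite eq_sym eq_mulgV1; apply/eqP; apply: CS1.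
    by rewrite /Cgrp groupM ?groupV ?cycle_id.
  have -> : xbar mu lam * c^-1 = (xbar mu lam * s * (xbar mu lam)^-1)^-1 * (xbar mu lam * s * c^-1).
    by rewrite !invMg invgK !mulgA !mulgKV.
  by apply: (@groupM _ SG) => //; rewrite (@groupV _ SG).
rewrite eq_sym (negbTE xbar_neq1); apply/esym/negbTE/negP => h.
by have := none (xbar mu lam); rewrite /Cgrp cycle_id mem_rcoset h.
Qed.

Lemma conjS (g : GL2 F) : GLval g 1%R 0%R = 0%R ->
  (xbar mu lam * pgl g * (xbar mu lam)^-1 \in Sgrp F) =
  (mu * GLval g 0%R 0%R - lam * GLval g 0%R 1%R - mu * GLval g 1%R 1%R == 0)%R.
Proof.
move=> h0; rewrite xbarV xbarE -!pglM inS !GL_ME xgE igE -!mulmxE {1}[GLval g]mkE h0 /Mx /Nx !mkM mk10.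
by congr (_ == _); field.
Qed.


Definition beta := (mu / lam)%R.
Definition Phi (u : F) := mk u (beta * (u - 1))%R 0%R 1%R.
Definition Phi' (u : F) := mk (u^-1)%R (- (beta * (u - 1)) * u^-1)%R 0%R 1%R.

Lemma PhiV u : u != 0%R -> Phi u *m Phi' u = 1%:M.
Proof. by move=> u0; rewrite mkM -mk_scalar; apply: mk_eq; field. Qed.

Lemma Phi_unit u : u != 0%R -> Phi u \in unitmx.
Proof. by move=> u0; case: (mulmx1_unit (PhiV u0)). Qed.

Lemma PhiM u v : Phi u *m Phi v = Phi (u * v)%R.
Proof. by rewrite mkM; apply: mk_eq; ring. Qed.

Lemma uval_neq0 (a : {unit F}) : FinRing.uval a != 0%R.
Proof. by case: a => x /=; rewrite unitfE. Qed.

Definition phi (a : {unit F}) : PGL2 F := pgl (gl_of (Phi (FinRing.uval a))).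

Lemma phiE a : GLval (gl_of (Phi (FinRing.uval a))) = Phi (FinRing.uval a).
Proof. by rewrite gl_ofE // Phi_unit // uval_neq0. Qed.

Lemma phiM : {in [set: {unit F}] &, {morph phi : x y / x * y}}.
Proof.
move=> a b _ _; rewrite /phi -pglM; congr pgl; apply: val_inj.
change (GLval (gl_of (Phi (FinRing.uval (a*b)))) = GLval (gl_of (Phi (FinRing.uval a)) * gl_of (Phi (FinRing.uval b)))).
by rewrite GL_ME !phiE -mulmxE PhiM.
Qed.

Canonical phim := Morphism phiM.

Lemma phi_inj : 'injm phim.
Proof.
apply/injmP => a b _ _ /pgl_eq[c]; rewrite !phiE mul_scalar_mx => /matrixP E.
have := E 1%R 1%R; have := E 0%R 0%R; rewrite !mxE /= => e0; rewrite mulr1 => e1.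
by apply: val_inj; rewrite /= e0 -e1 mul1r.
Qed.


Lemma diag_neq0 (g : GL2 F) : GLval g 1%R 0%R = 0%R ->
  (GLval g 0%R 0%R != 0%R) && (GLval g 1%R 1%R != 0%R).
Proof.
move=> g10.
have e1 := congr1 (fun M : 'M[F]_2 => M 1%R 1%R) (congr1 GLval (mulgV g)).
have e0 := congr1 (fun M : 'M[F]_2 => M 0%R 0%R) (congr1 GLval (mulVg g)).
move: e1 e0; rewrite !GL_ME GL_1E -!mulmxE /= !mulm2E g10 !mxE /=.
rewrite mul0r add0r mulr0 addr0 => e1 e0; apply/andP; split; apply/eqP => z.
  by move: e0; rewrite z mulr0 => /eqP; rewrite eq_sym oner_eq0.
by move: e1; rewrite z mul0r => /eqP; rewrite eq_sym oner_eq0.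
Qed.

Lemma StabE : StabS mu lam = phim @* [set: {unit F}].
Proof.
rewrite morphimEdom; apply/setP => s; apply/idP/imsetP.
  rewrite stabP => /andP[]; case: (pgl_surj s) => g -> Sg.
  have g10 := Sg; rewrite inS in g10; move/eqP: g10 => g10.
  rewrite conjS // => /eqP cond.
  case/andP: (diag_neq0 g10) => n00 n11.
  set g00 : F := GLval g 0%R 0%R in cond n00 *; set g11 : F := GLval g 1%R 1%R in cond n11 *.
  set g01 : F := GLval g 0%R 1%R in cond *.
  have hu : (g00 / g11)%R \is a GRing.unit by rewrite unitfE mulf_neq0 ?invr_eq0.
  exists (FinRing.Unit hu); first by rewrite inE.
  have hs : (g11%:M : 'M[F]_2) \in unitmx by rewrite unitmxE det_scalar unitfE expf_neq0.
  have e : (lam * g01 = mu * g00 - mu * g11)%R.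
    by rewrite -[RHS]subr0 -cond; ring.
  have g01E : g01 = ((mu * g00 - mu * g11) / lam)%R by rewrite -e; field.
  have -> : g = gl_of (Phi (g00 / g11)%R) * gl_of (g11%:M).
    rewrite gl_ofM ?Phi_unit ?mulf_neq0 ?invr_eq0 // -[g in LHS]gl_ofK; congr gl_of.
    rewrite scalar_mxC mul_scalar_mx mkZ {1}[GLval g]mkE g10 -/g00 -/g01 -/g11 g01E.
    clearbody g00 g01 g11; rewrite /Phi /beta; apply: mk_eq; rewrite ?mulr0 ?mulr1 //; field; rewrite ?n11 ?hl //.
  rewrite pglM (_ : pgl (gl_of g11%:M) = 1) ?mulg1 //.
  by apply/eqP; rewrite pgl1P gl_ofE //; apply/is_scalar_mxP; exists g11.
case=> a _ ->; rewrite stabP; apply/andP; split.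
  by rewrite /phim /= /phi inS phiE mk10.
rewrite /phim /= /phi conjS; last by rewrite phiE mk10.
by rewrite phiE mk00 mk01 mk11 /beta; apply/eqP; field.
Qed.


Lemma StabS_cyclic : cyclic (StabS mu lam).
Proof. by rewrite StabE; apply: morphim_cyclic; exact: field_unit_group_cyclic. Qed.

Lemma card_Stab : #|StabS mu lam| = #|F|.-1.
Proof. by rewrite StabE card_injm ?phi_inj ?subsetT // card_finField_unit. Qed.

End Main.
End S.

Lemma lam_neq0 (F : finFieldType) (mu lam : F) :
  primitive_poly ('X^2 + mu *: 'X + lam%:P)%R -> lam != 0%R.
Proof.
case/primitive_polyP => -[[_ irr] _] _ _; apply/negP => /eqP l0.
have H : (('X - 0%:P) %| ('X^2 + mu *: 'X + lam%:P))%R.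
  by rewrite -root_factor_theorem rootE !hornerE l0 expr2 mul0r addr0.
have s1 : size ('X - 0%:P : {poly F})%R != 1%N by rewrite size_XsubC.
have := eqp_size (irr _ s1 H); rewrite size_XsubC l0 polyC0 addr0 size_polyDl ?size_polyXn //.
by rewrite (leq_ltn_trans (size_scale_leq _ _)) // size_polyX.
Qed.

Theorem mainTheorem5 (F : finFieldType) (q : nat) (hq : #|F| = q) (mu lam : F)
  (hprim : primitive_poly ('X^2 + mu *: 'X + lam%:P)%R) :
  StabS mu lam \isog Zp q.-1.
Proof.
have hl := lam_neq0 hprim.
have /cyclicP[s Es] := StabS_cyclic mu hl.
rewrite Es isog_sym (_ : q.-1 = #[s]%g); first exact: Zp_isog.
by rewrite /order -Es card_Stab // hq.
Qed.
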